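(* Let $g\ge 3$, let $(\alpha,\beta)$ be a coherent minimally intersecting filling pair on $S_g$, and let $a_1,\dots,a_{2(2g-1)}$ be the $\alpha$-sides of the $4(2g-1)$-gon $P$ obtained by cutting $S_g$ along $\alpha\cup\beta$, in cyclic clockwise order. If $a_i$ and $a_j$ with $i\neq j$ are glued to each other (i.e. are the two copies of the same subarc of $\alpha$), then: (1) $d(a_i,a_j)$ is odd; and (2) $d(a_i,a_j)\neq 1$.
   Context: $S_g$ is the closed orientable surface of genus $g$. A filling pair is a pair of simple closed curves in minimal position whose complement is a union of open disks. It is minimally intersecting if $i(\alpha,\beta)$ is minimal among filling pairs on $S_g$; for $g\ge3$ this minimum is $2g-1$. It is coherent if the absolute value of the algebraic intersection number equals $i(\alpha,\beta)$. For such a pair with $g\ge3$, $S_g\setminus(\alpha\cup\beta)$ is a single disk. Its closure is a $4(2g-1)$-gon $P$ whose sides alternate between subarcs of $\alpha$ and of $\beta$, with each subarc appearing as exactly two sides. The distance between $\alpha$-sides is $$d(a_i,a_j)=\begin{cases}|i-j|, & |i-j|\le 2g-1,\\ 2(2g-1)-|i-j|, & |i-j|>2g-1.\end{cases}$$ *)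

(* Defs.v *)
From mathcomp Require Import all_boot all_order all_algebra all_fingroup.
Set Implicit Arguments. Unset Strict Implicit. Unset Printing Implicit Defensive.

(* n = i(alpha,beta) intersection points, labelled by 'I_n.
   alpha visits them in the cyclic order given by the permutation [a]
   (alpha goes from p to a p), beta in the cyclic order given by [b].
   [eps p] is the sign of the crossing at p (true = +1).

   Darts (half-edges) at a vertex p: kind 0 = alpha outgoing,
   1 = beta outgoing, 2 = alpha incoming, 3 = beta incoming.
   Counterclockwise cyclic order at p (transverse crossing):
     eps p = true  : 0,1,2,3   (alpha+, beta+, alpha-, beta-)
     eps p = false : 0,3,2,1   (alpha+, beta-, alpha-, beta+). *)
Definition dart (n : nat) := ('I_n * 'I_4)%type.

Definition rot n (eps : 'I_n -> bool) (d : dart n) : dart n :=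
  (d.1, if eps d.1 then inord ((val d.2 + 1) %% 4) else inord ((val d.2 + 3) %% 4)).

Definition edge_inv n (a b : {perm 'I_n}) (d : dart n) : dart n :=
  match val d.2 with
  | 0 => (a d.1, inord 2)
  | 1 => (b d.1, inord 3)
  | 2 => ((a^-1)%g d.1, inord 0)
  | _ => ((b^-1)%g d.1, inord 1)
  end.

(* face permutation of the ribbon graph alpha \cup beta: its orbits are the
   boundary cycles of the components of S \ (alpha \cup beta); the dart d
   of an orbit is the side of the polygon traversed along the edge of d. *)
Definition face_perm n (a b : {perm 'I_n}) (eps : 'I_n -> bool) (d : dart n) : dart n :=
  rot eps (edge_inv a b d).

(* a permutation describing a closed curve through all n points: one cycle *)
Definition is_full_cycle n (s : {perm 'I_n}) : Prop :=
  forall x y : 'I_n, fconnect s x y.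

(* S \ (alpha \cup beta) is a single open disk: one face *)
Definition single_face n (a b : {perm 'I_n}) (eps : 'I_n -> bool) : Prop :=
  forall d d' : dart n, fconnect (face_perm a b eps) d d'.

Definition alg_int n (eps : 'I_n -> bool) : int :=
  (\sum_(p < n) (if eps p then 1 else -1))%R.

Definition coherent n (eps : 'I_n -> bool) : Prop :=
  absz (alg_int eps) = n.

Definition is_alpha n (d : dart n) : bool := ~~ odd (val d.2).

(* the subarc of alpha (edge of the graph) carried by an alpha-dart:
   the alpha-edge from p to a p is named p *)
Definition alpha_edge n (a : {perm 'I_n}) (d : dart n) : 'I_n :=
  if val d.2 == 0 then d.1 else (a^-1)%g d.1.

Definition alpha_sides n (a b : {perm 'I_n}) (eps : 'I_n -> bool) (d0 : dart n)
  : seq (dart n) :=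
  [seq d <- traject (face_perm a b eps) d0 (4 * n) | is_alpha d].

Definition side_dist (g i j : nat) : nat :=
  let k := if i <= j then j - i else i - j in
  if k <= 2 * g - 1 then k else 2 * (2 * g - 1) - k.

(* Main.v *)
Require Import Defs.
From mathcomp Require Import all_boot all_order all_algebra all_fingroup zify.
Set Implicit Arguments. Unset Strict Implicit.
Import GRing.Theory.

Lemma val_rot n (eps : 'I_n -> bool) (d : dart n) :
  (Defs.rot eps d).1 = d.1 /\ val (Defs.rot eps d).2 = if eps d.1 then (val d.2 + 1) %% 4 else (val d.2 + 3) %% 4.
Proof. rewrite /rot /=; split=> //; case: (eps d.1); by rewrite inordK ?ltn_pmod. Qed.

Lemma rot_inj n (eps : 'I_n -> bool) : injective (Defs.rot eps).
Proof.
move=> [p k] [q l] H.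
have [E1 E2] := val_rot eps (p,k); have [F1 F2] := val_rot eps (q,l).
rewrite H F1 /= in E1. subst q.
rewrite H F2 /= in E2.
apply: f_equal; apply: val_inj; move: E2; case: (eps p); case: k l {H F1 F2} => [k Hk] [l Hl] /=;
 move: Hk Hl; do 5? case: k => [|k] //; do 5? case: l => [|l] //.
Qed.

Lemma edge_invK n (a b : {perm 'I_n}) : involutive (edge_inv a b).
Proof.
move=> [p [k Hk]]; rewrite /edge_inv /=.
case: k Hk => [|[|[|[|k]]]] Hk //=; rewrite ?inordK //= ?permK ?permKV;
congr pair; apply: val_inj; rewrite /= inordK //.
Qed.

Lemma face_inj n (a b : {perm 'I_n}) eps : injective (face_perm a b eps).
Proof. move=> x y /rot_inj H; exact: (inv_inj (@edge_invK n a b)). Qed.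

Lemma fk n (a b : {perm 'I_n}) eps (d : dart n) :
  face_perm a b eps d =
  match val d.2 with
  | 0 => (a d.1, inord (if eps (a d.1) then 3 else 1))
  | 1 => (b d.1, inord (if eps (b d.1) then 0 else 2))
  | 2 => ((a^-1)%g d.1, inord (if eps ((a^-1)%g d.1) then 1 else 3))
  | _ => ((b^-1)%g d.1, inord (if eps ((b^-1)%g d.1) then 2 else 0))
  end.
Proof.
case: d => p [k Hk]; rewrite /face_perm /edge_inv /Defs.rot /=.
case: k Hk => [|[|[|[|k]]]] Hk //=; rewrite inordK //; by case: eps.
Qed.

Lemma alpha_f n (a b : {perm 'I_n}) eps (d : dart n) :
  is_alpha (face_perm a b eps d) = ~~ is_alpha d.
Proof.
rewrite fk /is_alpha; case: d => p [k Hk] /=.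
case: k Hk => [|[|[|[|k]]]] Hk //=; by case: eps; rewrite inordK.
Qed.

Lemma ff_spec n (a b : {perm 'I_n}) eps c (d : dart n) :
  (forall p, eps p = c) -> (forall x, b x != x) -> is_alpha d ->
  val (face_perm a b eps (face_perm a b eps d)).2 = (if val d.2 == 0 then 2 else 0)
  /\ alpha_edge a (face_perm a b eps (face_perm a b eps d)) != alpha_edge a d.
Proof.
move=> Hc Hb; rewrite (fk _ _ _ (face_perm a b eps d)) (fk _ _ _ d) /is_alpha /alpha_edge !Hc.
case: d => p [k Hk].
case: k Hk => [|[|[|[|k]]]] Hk //= _; case: c Hc => Hc; rewrite inordK //= ?inordK //=.
all: split=> //; apply/eqP => E.
- move/(congr1 a): E; rewrite permKV => E.
  by move: (Hb ((b^-1)%g (a p))); rewrite permKV E eqxx.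
- move/(congr1 a): E; rewrite permKV => E.
  by move: (Hb (a p)); rewrite E eqxx.
- by move: (Hb ((b^-1)%g ((a^-1)%g p))); rewrite permKV E eqxx.
Qed.

Lemma filt n (a b : {perm 'I_n}) eps (x : dart n) m : forall d i, i < m ->
  nth x [seq e <- traject (face_perm a b eps) d (2 * m) | is_alpha e] i
  = iter (2 * i + ~~ is_alpha d) (face_perm a b eps) d.
Proof.
set f := face_perm a b eps.
elim: m => [//|m IH] d i Hi.
have -> : 2 * m.+1 = (2 * m).+2 by rewrite mulnS.
have Hf : is_alpha (f d) = ~~ is_alpha d by exact: alpha_f.
have Hff : is_alpha (f (f d)) = is_alpha d by rewrite /f !alpha_f negbK.
rewrite /= Hf.
case Ha: (is_alpha d) => /=.
- case: i Hi => [|i] Hi //=.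
  rewrite IH // Hff Ha /=.
  rewrite -!iterSr -iterS. apply: (congr1 (fun k => iter k f d)); lia.
- case: i Hi => [|i] Hi //=.
  rewrite IH // Hff Ha /=.
  rewrite -!iterSr -iterS. apply: (congr1 (fun k => iter k f d)); lia.
Qed.

Lemma coh_const n (eps : 'I_n -> bool) : coherent eps -> forall p q, eps p = eps q.
Proof.
rewrite /coherent /alg_int.
rewrite (bigID (fun p => eps p)) /=.
rewrite (eq_bigr (fun _ => 1%R)); last by move=> i ->.
rewrite [X in (_ + X)%R](eq_bigr (fun _ => (-1)%R)); last by move=> i /negbTE ->.
rewrite !sumr_const.
have HC := cardC (fun p : 'I_n => eps p). rewrite card_ord in HC.
set t := #|_| in HC *; set u := #|_| in HC *.
have Hu : u = #|[pred p | ~~ eps p]| by [].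
move=> H.
have : (t == 0) || (u == 0).
  move: H; rewrite -HC. 
  have -> : ((1 : int) *+ t + (-1) *+ u)%R = (t%:Z - u%:Z)%R.
    by rewrite mulNrn !natz.
  lia.
case/orP => /eqP H0.
- have H1 : forall p, eps p = false.
    move=> p; apply/negbTE/negP => Hp.
    move: H0; rewrite /t; move/card0_eq => /(_ p). rewrite /in_mem /=. by move=> E; rewrite E in Hp.
  by move=> p q; rewrite !H1.
- have H1 : forall p, eps p = true.
    move=> p; apply/negPn/negP => Hp.
    move: H0; rewrite Hu; move/card0_eq => /(_ p). rewrite /in_mem /= => E. by rewrite Hp in E.
  by move=> p q; rewrite !H1.
Qed.

Lemma alpha_iter n (a b : {perm 'I_n}) eps (d : dart n) k :
  is_alpha (iter k (face_perm a b eps) d) = is_alpha d (+) odd k.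
Proof.
elim: k => [|k IH]; first by rewrite addbF.
by rewrite iterS alpha_f IH /= addbN.
Qed.

Lemma odd_mod x : odd x = (x %% 2 == 1).
Proof. by rewrite modn2; case: odd. Qed.

Lemma nofix n (b : {perm 'I_n}) : 1 < n -> is_full_cycle b -> forall x, b x != x.
Proof.
move=> Hn Hb x; apply/negP => /eqP E.
have Hit : forall k, iter k b x = x.
  by elim=> [|k IH] //=; rewrite IH E.
pose o0 : 'I_n := Ordinal (ltnW Hn). pose o1 : 'I_n := Ordinal Hn.
pose y := if x == o0 then o1 else o0.
have Hy : y != x.
  rewrite /y; case: (x =P o0) => [->|H]; first by apply/eqP => /(congr1 val).
  by apply/eqP => E'; apply: H; rewrite -E'.
have := Hb x y; rewrite fconnect_orbit => /trajectP [k _ Ek].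
by move: Hy; rewrite Ek Hit eqxx.
Qed.

Theorem lemma6 (g : nat) (a b : {perm 'I_(2 * g - 1)})
  (eps : 'I_(2 * g - 1) -> bool) :
  3 <= g ->
  is_full_cycle a -> is_full_cycle b ->
  single_face a b eps ->
  coherent eps ->
  forall (d0 : dart (2 * g - 1)) (i j : nat),
    i < 2 * (2 * g - 1) -> j < 2 * (2 * g - 1) -> i != j ->
    alpha_edge a (nth d0 (alpha_sides a b eps d0) i)
      = alpha_edge a (nth d0 (alpha_sides a b eps d0) j) ->
    odd (side_dist g i j) /\ side_dist g i j != 1.
Proof.
move=> Hg Ha Hb Hsf Hcoh d0 i j Hi Hj Hij.
set n := 2 * g - 1 in a b eps Ha Hb Hsf Hcoh d0 Hi Hj *.
have Hn : 1 < n by rewrite /n; lia.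
have Hbf := nofix Hn Hb.
pose o0 : 'I_n := Ordinal (ltnW Hn).
have Hc : forall p, eps p = eps o0 by move=> p; apply: coh_const.
set f := face_perm a b eps.
have finj : injective f by exact: face_inj.
have Ho : fingraph.order f d0 = 4 * n.
  rewrite /fingraph.order (eq_card_prod (A := fconnect f d0)); last by move=> d; rewrite !inE; apply: Hsf.
  by rewrite !card_ord mulnC.
set s := ~~ is_alpha d0.
pose D k := iter (2 * k + s) f d0.
have HD : forall k, k < 2 * n -> nth d0 (alpha_sides a b eps d0) k = D k.
  move=> k Hk; rewrite /alpha_sides.
  have -> : 4 * n = 2 * (2 * n) by rewrite mulnA.
  by rewrite (@filt _ a b eps d0 (2 * n) d0 k Hk).
rewrite !HD //.
have DS : forall k, D k.+1 = f (f (D k)).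
  by move=> k; rewrite /D -!iterS; apply: (congr1 (fun m => iter m f d0)); lia.
have Dal : forall k, is_alpha (D k).
  move=> k; rewrite /D alpha_iter oddD oddM /= /s; by case: is_alpha.
have Dkind : forall k, (val (D k).2 == 0) = (val (D 0).2 == 0) (+) odd k.
  elim=> [|k IH]; first by rewrite addbF.
  have [H1 _] := ff_spec a Hc Hbf (Dal k).
  rewrite DS H1 [odd _]/= addbN -IH; by case: (val (D k).2 == 0).
have Dinj : forall k l, k < 2 * n -> l < 2 * n -> D k = D l -> k = l.
  move=> k l Hk Hl E.
  have Hs : s <= 1 by rewrite /s; case: is_alpha.
  have E1 : findex f d0 (D k) = 2 * k + s by apply: findex_iter; rewrite Ho; lia.
  have E2 : findex f d0 (D l) = 2 * l + s by apply: findex_iter; rewrite Ho; lia.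
  move: E1; rewrite E E2; lia.
have Hkind : forall k, val (D k).2 = 0 \/ val (D k).2 = 2.
  move=> k; have := Dal k; rewrite /is_alpha; case: (D k) => p [[|[|[|[|m]]]] Hm] //= _; by [left|right].
move=> E.
have Hpar : odd i != odd j.
  apply/negP => /eqP Hp.
  have Hk : (val (D i).2 == 0) = (val (D j).2 == 0) by rewrite (Dkind i) (Dkind j) Hp.
  have Hd : D i = D j.
    move: Hk E (Hkind i) (Hkind j); rewrite /alpha_edge.
    case: (D i) => p1 [k1 h1]; case: (D j) => p2 [k2 h2] /= Hk E K1 K2.
    have ek : k1 = k2 by case: K1 K2 Hk => -> [] ->.
    subst k2; rewrite (bool_irrelevance h1 h2).
    suff -> : p1 = p2 by [].
    case: K1 E => -> /= E; first by [].
    exact: (perm_inj E).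
  by move/eqP: Hij; apply; apply: Dinj.
split.
  have Hodd : odd (i + j) by rewrite oddD; move: Hpar; case: (odd i); case: (odd j).
  move: Hodd; rewrite /side_dist !odd_mod => /eqP Hodd.
  case: ifP => H2; case: ifP => H3; apply/eqP; lia.
apply/eqP => H1.
have Hadj : forall k, alpha_edge a (f (f (D k))) != alpha_edge a (D k).
  by move=> k; have [_ ->] := ff_spec a Hc Hbf (Dal k).
have Hwrap : f (f (D (2 * n).-1)) = D 0.
  have Hs : s <= 1 by rewrite /s; case: is_alpha.
  rewrite /D -!iterS.
  have -> : (2 * (2 * n).-1 + s).+2 = s + fingraph.order f d0 by rewrite Ho; lia.
  by rewrite iterD iter_order // muln0 add0n.
have : [\/ j = i.+1, i = j.+1, i = 0 /\ j = (2 * n).-1 | j = 0 /\ i = (2 * n).-1].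
  move: H1; rewrite /side_dist -/n; case: ifP => H2; case: ifP => H3 H.
  apply: Or41; lia. apply: Or42; lia. by apply: Or43; split; lia. by apply: Or44; split; lia.
case=> [Ej|Ei|[Ei Ej]|[Ej Ei]].
- by move: (Hadj i); rewrite -DS -Ej E eqxx.
- by move: (Hadj j); rewrite -DS -Ei E eqxx.
- by rewrite Ei Ej in E; move: (Hadj (2 * n).-1); rewrite Hwrap E eqxx.
- by rewrite Ei Ej in E; move: (Hadj (2 * n).-1); rewrite Hwrap -E eqxx.
Qed.
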